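(* Let $n\ge1$, $\tau\in\mathbb R$, and let $P_1,\dots,P_J$ be Hermitian operators on $(\mathbb C^2)^{\otimes n}$, each equal to $\pm P$ for some non-identity Pauli string $P\in\{I,X,Y,Z\}^{\otimes n}\setminus\{I^{\otimes n}\}$. Define $$A=\Big(\prod_{j=1}^{J} e^{-\tau P_j}\Big)\,\mathbb I\,\Big(\prod_{j=J}^{1} e^{-\tau P_j}\Big),$$ where the first product is ordered $e^{-\tau P_1}e^{-\tau P_2}\cdots e^{-\tau P_J}$ and the second $e^{-\tau P_J}\cdots e^{-\tau P_1}$. Then $\operatorname{Tr}[A]\ge 2^n$. *)

(* Defs.v *)
From HB Require Import structures.
From mathcomp Require Import all_boot all_order all_algebra.
From mathcomp Require Import all_classical all_reals all_analysis.
From mathcomp Require Import complex.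
Set Implicit Arguments. Unset Strict Implicit. Unset Printing Implicit Defensive.
Import Order.TTheory GRing.Theory Num.Theory numFieldNormedType.Exports.
Local Open Scope ring_scope.
Local Open Scope complex_scope.

Section Pauli.
Variable R : realType.

(* single-qubit Pauli matrices, indexed 0 = I, 1 = X, 2 = Y, 3 = Z *)
Definition pauli1 (k : 'I_4) : 'M[R[i]]_2 :=
  \matrix_(a < 2, b < 2)
    match val k with
    | 0%N => if a == b then 1 else 0
    | 1%N => if a == b then 0 else 1
    | 2%N => if a == b then 0
             else if val a == 0%N then - 'i else 'i
    | _ => if a == b then (if val a == 0%N then 1 else -1) else 0
    end.

Definition qbit n (a : 'I_(2 ^ n)) (k : 'I_n) : 'I_2 :=
  inord (odd (val a %/ 2 ^ k)).

(* Pauli string s_0 \otimes ... \otimes s_{n-1} on (C^2)^{\otimes n}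
   (entries of the Kronecker product, written out) *)
Definition pauli_string n (s : {ffun 'I_n -> 'I_4}) : 'M[R[i]]_(2 ^ n) :=
  \matrix_(a, b) \prod_(k < n) pauli1 (s k) (qbit a k) (qbit b k).

Definition nonidentity n (s : {ffun 'I_n -> 'I_4}) : Prop := exists k, s k != 0.

Definition adjmx m (A : 'M[R[i]]_m) : 'M[R[i]]_m := \matrix_(a, b) (A b a)^*.
Definition is_hermitian m (A : 'M[R[i]]_m) : Prop := adjmx A = A.

Definition expm m (A : 'M[R[i]]_m) : 'M[R[i]]_m :=
  \matrix_(a, b)
    ((limn (series (fun k : nat => @complex.Re R ((A ^+ k) a b / (k`!)%:R)))) +i*
     (limn (series (fun k : nat => @complex.Im R ((A ^+ k) a b / (k`!)%:R))))).

End Pauli.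

(* Main.v *)
Require Import Defs.
From HB Require Import structures.
From mathcomp Require Import all_boot all_order all_algebra.
From mathcomp Require Import all_classical all_reals all_analysis.
From mathcomp Require Import complex.
Import Order.TTheory GRing.Theory Num.Theory numFieldNormedType.Exports.
Local Open Scope ring_scope.
From mathcomp Require Import ring lra.
Section Spec.
Local Open Scope sesquilinear_scope.
Variable C : numClosedFieldType.

Lemma trace_ge N (M : 'M[C]_N) : \det M ^+ 2 = 1 -> N%:R <= \tr (M *m M^t*).
Proof.
move=> dM.
set H := M *m M^t*.
have Hh : H^t* = H by rewrite /H trmx_mul map_mxM trmxCK.
have Hn : H \is normalmx by apply/normalmxP; rewrite Hh.
have HE := orthomx_spectralP Hn.
set P := spectralmx H in HE; set d := spectral_diag H in HE.
have Pu : P \is unitarymx by apply: spectral_unitarymx.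
have PPt : P *m P^t* = 1%:M by apply/unitarymxP.
have Pi : invmx P = P^t* by rewrite invmx_unitary.
rewrite Pi in HE.
have Dd : diag_mx d = (P *m M) *m (P *m M)^t*.
  by rewrite trmx_mul map_mxM !mulmxA -(mulmxA P M) -/H HE !mulmxA PPt mul1mx -mulmxA PPt mulmx1.
have d0 : forall i, 0 <= d 0 i.
  move=> i; have /matrixP/(_ i i) := Dd; rewrite mxE eqxx mulr1n => ->.
  rewrite mxE; apply: sumr_ge0 => k _; rewrite !mxE; exact: mul_conjC_ge0.
have trH : \tr H = \sum_i d 0 i.
  by rewrite HE mxtrace_mulC mulmxA PPt mul1mx mxtrace_diag.
have detH : \prod_i d 0 i = 1.
  rewrite -det_diag Dd det_mulmx -map_trmx det_tr (det_map_mx (Num.conj_op)) det_mulmx.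
  have dP : \det P * (\det P)^* = 1.
    by have := congr1 determinant PPt; rewrite det_mulmx -map_trmx det_tr (det_map_mx (Num.conj_op)) det1.
  idtac.
  rewrite rmorphM mulrACA dP mul1r.
  have : (\det M ^+ 2 == 1) by rewrite dM.
  rewrite sqrf_eq1; case/orP => /eqP ->.
    by rewrite rmorph1 mulr1.
  by rewrite rmorphN rmorph1 mulrNN mulr1.
have dge : 0 <= \sum_i d 0 i by apply: sumr_ge0 => i _; apply: d0.
have := @leif_AGM C 'I_N predT (fun i => d 0 i) (fun i _ => d0 i).
rewrite /= cardT size_enum_ord => -[le _]; move: le.
have -> : \prod_(i in predT) d 0 i = 1 by exact: detH.
have -> : \sum_(i in predT) d 0 i = \tr H by rewrite trH.
rewrite -trH in dge.
have [N0|Npos] := posnP N.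
  by move=> _; have -> : (N%:R : C) = 0 by rewrite N0.
have Ng : (0 : C) < N%:R by rewrite ltr0n.
have mu0 : 0 <= \tr H / N%:R by rewrite divr_ge0 // ltW.
rewrite -[X in X <= _ -> _](expr1n C N) ler_pXn2r // ?nnegrE // => le1.
by rewrite ler_pdivlMr // mul1r in le1.
Qed.
End Spec.
Section Expm.
Variable R : realType.
Local Open Scope complex_scope.
Local Open Scope classical_set_scope.

Lemma series_exp_cvg (x : R) : series (exp_coeff x) @ \oo --> expR x.
Proof.
have -> : expR x = limn (series (exp_coeff x)).
  by rewrite expRE exp_coeffE /pseries.
exact: is_cvg_series_exp_coeff.
Qed.

Lemma exp_coeffN (x : R) k : exp_coeff (- x) k = (-1) ^+ k * exp_coeff x k.
Proof. by rewrite /exp_coeff /= -[in LHS]mulN1r exprMn mulrA. Qed.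

Lemma lim_comb (x a b : R) (u : nat -> R) :
  (forall k, u k = ((a + b) / 2) * exp_coeff x k + ((a - b) / 2) * exp_coeff (- x) k) ->
  limn (series u) = a * ((expR x + expR (- x)) / 2) + b * ((expR x - expR (- x)) / 2).
Proof.
move=> hu; apply: cvg_lim => //.
have -> : series u = (fun n => ((a + b) / 2) * series (exp_coeff x) n +
                              ((a - b) / 2) * series (exp_coeff (- x)) n).
  apply/funext => n; rewrite /series /= (eq_bigr _ (fun k _ => hu k)).
  by rewrite big_split /= -!mulr_sumr.
have -> : a * ((expR x + expR (- x)) / 2) + b * ((expR x - expR (- x)) / 2) =
  ((a + b) / 2) * expR x + ((a - b) / 2) * expR (- x) by field.
apply: cvgD; apply: cvgM; (try exact: cvg_cst); exact: series_exp_cvg.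
Qed.

Lemma Re_realM (r : R) (z : R[i]) : complex.Re (r%:C * z) = r * complex.Re z.
Proof. by case: z => zr zi /=; rewrite mul0r subr0. Qed.
Lemma Im_realM (r : R) (z : R[i]) : complex.Im (r%:C * z) = r * complex.Im z.
Proof. by case: z => zr zi /=; rewrite mul0r addr0. Qed.

Lemma expm_invol N (P : 'M[R[i]]_N) (x : R) : P *m P = 1%:M ->
  expm (x%:C *: P) = ((expR x + expR (- x)) / 2)%:C *: 1%:M
                     + ((expR x - expR (- x)) / 2)%:C *: P.
Proof.
move=> PP.
have Xk : forall k, (x%:C *: P) ^+ k = (x ^+ k)%:C *: (if odd k then P else 1%:M).
  elim=> [|k IH]; first by rewrite expr0 scale1r idmxE.
  rewrite exprS IH -mulmxE -scalemxAr -scalemxAl scalerA -rmorphM -exprSr.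
  have -> : odd k.+1 = ~~ odd k by []. by case: (odd k); rewrite /= ?PP ?mulmx1.
apply/matrixP => a b.
have hu : forall (f : R[i] -> R), (forall (r : R) z, f (r%:C * z) = r * f z) ->
  forall k, f (((x%:C *: P) ^+ k) a b / (k`!)%:R) =
   ((f ((1%:M : 'M[R[i]]_N) a b) + f (P a b)) / 2) * exp_coeff x k
   + ((f ((1%:M : 'M[R[i]]_N) a b) - f (P a b)) / 2) * exp_coeff (- x) k.
  move=> f fM k; rewrite Xk mxE mulrAC -[(k`!)%:R](rmorph_nat (real_complex R)).
  rewrite -fmorphV -rmorphM fM exp_coeffN /exp_coeff /= -signr_odd.
  by case: (odd k) => /=; rewrite ?expr1 ?expr0; field; rewrite pnatr_eq0 -lt0n fact_gt0.
rewrite /expm mxE (@lim_comb x _ _ _ (hu _ Re_realM)) (@lim_comb x _ _ _ (hu _ Im_realM)).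
rewrite [RHS]mxE [in RHS]mxE [X in _ = _ + X]mxE.
case: (P a b) => pr pi; case: ((1%:M : 'M[R[i]]_N) a b) => ir ii.
rewrite /=; apply/eqP; rewrite eq_complex /=; apply/andP; split; apply/eqP; field.
all: by [].
Qed.
End Expm.
Section P1.
Variable R : realType.
Local Open Scope complex_scope.

Lemma pauli1_sq (u : 'I_4) : pauli1 R u *m pauli1 R u = 1%:M.
Proof.
apply/matrixP => i j; rewrite !mxE !big_ord_recr !big_ord0 /= !mxE.
case: u => [[|[|[|[|//]]]] ?]; case: i => [[|[|//]] ?]; case: j => [[|[|//]] ?];
  rewrite /= ?eqE /=; simpc.
all: by [].
Qed.
End P1.
Section P2.
Variable R : realType.
Local Open Scope complex_scope.
Lemma pauli1_anti (u v : 'I_4) : [&& (val u != 0)%N, (val v != 0)%N & (val u != val v)] ->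
  pauli1 R u *m pauli1 R v = - (pauli1 R v *m pauli1 R u).
Proof.
case: u => [[|[|[|[|//]]]] ?]; case: v => [[|[|[|[|//]]]] ?] //= _;
apply/matrixP => i j; rewrite !mxE !big_ord_recr !big_ord0 /= !mxE;
case: i => [[|[|//]] ?]; case: j => [[|[|//]] ?];
  rewrite /= ?eqE /=; simpc.
all: by [].
Qed.
End P2.
Lemma bits_inj n (a b : nat) : (a < 2^n)%N -> (b < 2^n)%N ->
  (forall k, (k < n)%N -> odd (a %/ 2^k) = odd (b %/ 2^k)) -> a = b.
Proof.
elim: n a b => [|n IH] a b.
  by rewrite expn0; case: a => [|//]; case: b.
move=> ha hb h.
rewrite (divn_eq a 2) (divn_eq b 2) !modn2.
have h0 := h 0%N isT; rewrite !expn0 !divn1 in h0; rewrite h0.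
congr (_ * _ + _)%N; apply: IH.
- by rewrite ltn_divLR // -expnSr.
- by rewrite ltn_divLR // -expnSr.
move=> k hk; have := h k.+1 hk; by rewrite expnS !divnMA.
Qed.

Lemma qbit_inj n (a b : 'I_(2^n)) : (forall k, qbit a k = qbit b k) -> a = b.
Proof.
move=> h; apply: val_inj; apply: (@bits_inj n); rewrite ?ltn_ord // => k hk.
have := h (Ordinal hk); rewrite /qbit /= => /(congr1 (@nat_of_ord 2)).
rewrite !inordK; try by case: odd.
by case: (odd (a %/ 2 ^ k)); case: (odd (b %/ 2 ^ k)).
Qed.

Lemma bits_bij n : bijective (fun a : 'I_(2^n) => [ffun k => qbit a k]).
Proof.
apply: inj_card_bij.
  move=> a b /ffunP e; apply: qbit_inj => k; have := e k; rewrite !ffunE //.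
by rewrite card_ffun !card_ord.
Qed.

Section Kron.
Variable Rg : comNzRingType.

Definition kron {n} (f : 'I_n -> 'M[Rg]_2) : 'M[Rg]_(2^n) :=
  \matrix_(a, b) \prod_(k < n) f k (qbit a k) (qbit b k).

Lemma kronM n (f g : 'I_n -> 'M[Rg]_2) :
  kron f *m kron g = kron (fun k => f k *m g k).
Proof.
apply/matrixP => a b; rewrite !mxE.
under [RHS]eq_bigr do rewrite mxE.
rewrite bigA_distr_bigA /=.
rewrite (reindex _ (onW_bij _ (bits_bij n))) /=.
apply: eq_bigr => c _; rewrite !mxE -big_split /=.
by apply: eq_bigr => k _; rewrite ffunE.
Qed.

Lemma kron1 n : kron (fun _ : 'I_n => 1%:M) = 1%:M.
Proof.
apply/matrixP => a b; rewrite !mxE.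
have [->|neq] := eqVneq a b.
  by apply: big1 => k _; rewrite mxE eqxx.
have [k hk] : exists k, qbit a k != qbit b k.
  apply/existsP; apply: contraT; rewrite negb_exists => /forallP hk.
  by move: neq; rewrite (@qbit_inj n a b (fun k => eqP (negbNE (hk k)))) eqxx.
by rewrite (bigD1 k) //= mxE (negbTE hk) mul0r.
Qed.

Lemma kron_scal n (f g : 'I_n -> 'M[Rg]_2) (k0 : 'I_n) (c : Rg) :
  f k0 = c *: g k0 -> (forall k, k != k0 -> f k = g k) -> kron f = c *: kron g.
Proof.
move=> h0 h; apply/matrixP => a b; rewrite !mxE [LHS](bigD1 k0) //= [in RHS](bigD1 k0) //= h0 mxE -mulrA.
congr (_ * (_ * _)); apply: eq_bigr => k hk; by rewrite h.
Qed.
End Kron.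
Section Main.
Local Open Scope sesquilinear_scope.

Lemma trC_prod (C : numClosedFieldType) N J (F : 'I_J -> 'M[C]_N) :
  (\prod_(j < J) F j)^t* = \prod_(j < J) (F (rev_ord j))^t*.
Proof.
elim: J F => [|J IH] F; first by rewrite !big_ord0 -idmxE trmx1 map_mx1.
rewrite big_ord_recr /= -mulmxE trmx_mul map_mxM IH big_ord_recl /= mulmxE.
congr (_ * _).
  by congr (_ ^t*); congr F; apply: val_inj; rewrite /= subn1.
apply: eq_bigr => i _; congr (_ ^t*); congr F; apply: val_inj => /=.
by rewrite subSS.
Qed.

Lemma det_prod (C : comNzRingType) N J (F : 'I_J -> 'M[C]_N) :
  \det (\prod_(j < J) F j) = \prod_(j < J) \det (F j).
Proof.
elim: J F => [|J IH] F; first by rewrite !big_ord0 -idmxE det1.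
by rewrite !big_ord_recr /= -mulmxE det_mulmx IH.
Qed.

Lemma cs_mul (C : comNzRingType) N (P : 'M[C]_N) (c s : C) : P *m P = 1%:M ->
  (c *: 1%:M + s *: P) *m (c *: 1%:M - s *: P) = (c ^+ 2 - s ^+ 2) *: 1%:M.
Proof.
move=> PP; rewrite mulmxDl !mulmxBr -!scalemxAl -!scalemxAr !mul1mx !mulmx1 PP.
by apply/matrixP => i j; rewrite !mxE; ring.
Qed.

Lemma det_cs (C : fieldType) N (P Q : 'M[C]_N) (c s : C) : P *m P = 1%:M ->
  Q *m Q = 1%:M -> Q *m P = - (P *m Q) -> c ^+ 2 - s ^+ 2 = 1 ->
  \det (c *: 1%:M + s *: P) ^+ 2 = 1.
Proof.
move=> PP QQ QP cs.
have e1 := congr1 determinant (@cs_mul _ _ P c s PP).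
rewrite cs scale1r det1 det_mulmx in e1.
have e2 : Q *m (c *: 1%:M + s *: P) *m Q = c *: 1%:M - s *: P.
  rewrite mulmxDr mulmxDl -!scalemxAr -!scalemxAl mulmx1 QQ QP mulNmx -mulmxA QQ.
  by rewrite mulmx1 scalerN.
have e3 : \det (c *: 1%:M - s *: P) = \det (c *: 1%:M + s *: P).
  by rewrite -e2 !det_mulmx mulrAC -det_mulmx QQ det1 mul1r.
by rewrite expr2 -{2}e3.
Qed.
End Main.
Section Fin.
Variable R : realType.
Local Open Scope complex_scope.
Local Open Scope sesquilinear_scope.

Lemma pauli1_0 (u : 'I_4) : val u = 0%N -> pauli1 R u = 1%:M.
Proof.
move=> u0; apply/matrixP => i j; rewrite !mxE u0.
by case: i => [[|[|//]] ?]; case: j => [[|[|//]] ?].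
Qed.

Lemma pstring_kron n (s : {ffun 'I_n -> 'I_4}) :
  pauli_string R s = @kron R[i] _ (fun k => pauli1 R (s k)).
Proof. by []. Qed.

Lemma pstring_sq n (s : {ffun 'I_n -> 'I_4}) :
  pauli_string R s *m pauli_string R s = 1%:M.
Proof.
rewrite pstring_kron kronM.
have -> : (fun k => pauli1 R (s k) *m pauli1 R (s k)) = (fun _ => 1%:M).
  by apply/funext => k; apply: pauli1_sq.
exact: kron1.
Qed.

Lemma pstring_anti n (s : {ffun 'I_n -> 'I_4}) : nonidentity s ->
  exists Q, Q *m Q = 1%:M /\ Q *m pauli_string R s = - (pauli_string R s *m Q).
Proof.
case=> k0 hk0.
have sk0 : (val (s k0) != 0)%N.
  by apply: contra hk0 => /eqP e; apply/eqP; apply: val_inj.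
pose v : 'I_4 := if (val (s k0) == 3)%N then @Ordinal 4 1 isT else @Ordinal 4 3 isT.
pose t : {ffun 'I_n -> 'I_4} := [ffun k => if k == k0 then v else @Ordinal 4 0 isT].
exists (pauli_string R t); split; first exact: pstring_sq.
rewrite !pstring_kron !kronM -scaleN1r.
apply: (@kron_scal _ _ _ _ k0).
  rewrite ffunE eqxx scaleN1r; apply: pauli1_anti.
  rewrite sk0 /v; case: ifP => /= [/eqP ->//|]; by rewrite eq_sym => ->.
move=> k hk; rewrite ffunE (negbTE hk) pauli1_0 //.
by rewrite mul1mx mulmx1.
Qed.

Lemma conjRC (x : R) : Num.conj (x%:C : R[i]) = x%:C.
Proof. by apply: conj_Creal; apply/complex_realP; exists x. Qed.

Lemma adjmxE N (A : 'M[R[i]]_N) : adjmx A = A^t*.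
Proof. by apply/matrixP => a b; rewrite !mxE. Qed.

End Fin.

Local Open Scope complex_scope.

Section Fin2.
Variable R : realType.
Local Open Scope complex_scope.
Local Open Scope sesquilinear_scope.

Lemma herm_entry N (A : 'M[R[i]]_N) : is_hermitian A -> forall a b, Num.conj (A b a) = A a b.
Proof.
move=> h a b; have := h; rewrite /is_hermitian => /matrixP/(_ a b); rewrite mxE => e.
exact: e.
Qed.

Lemma final_step N J (F : 'I_J -> 'M[R[i]]_N) : (forall j, \det (F j) ^+ 2 = 1) ->
  (forall j, (F j)^t* = F j) ->
  N%:R <= \tr ((\prod_(j < J) F j) * 1%:M * (\prod_(j < J) F (rev_ord j))).
Proof.
move=> dF hF.
have -> : \prod_(j < J) F (rev_ord j) = (\prod_(j < J) F j)^t*.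
  rewrite trC_prod; apply: eq_bigr => j _; rewrite hF; reflexivity.
rewrite -idmxE mulr1.
apply: trace_ge.
rewrite det_prod -prodrXl; apply: big1 => j _; apply: dF.
Qed.

Lemma E_herm N (P : 'M[R[i]]_N) (c s : R) : is_hermitian P ->
  (c%:C *: 1%:M + s%:C *: P)^t* = c%:C *: 1%:M + s%:C *: P.
Proof.
move=> hP; apply/matrixP => a b.
rewrite !mxE rmorphD !rmorphM /= !conjRC (@herm_entry _ _ hP) eq_sym rmorph_nat.
reflexivity.
Qed.
End Fin2.
Local Open Scope complex_scope.

Theorem mainTheorem2 (R : realType) (n : nat) (tau : R) (J : nat)
    (P : 'I_J -> 'M[R[i]]_(2 ^ n)) :
  (1 <= n)%N ->
  (forall j, is_hermitian (P j)) ->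
  (forall j, exists (sgn : bool) (s : {ffun 'I_n -> 'I_4}),
      nonidentity s /\ P j = ((-1) ^+ sgn) *: pauli_string R s) ->
  let E := fun j => expm (- (tau%:C) *: P j) in
  ((2 ^ n)%:R : R[i]) <=
    \tr ((\prod_(j < J) E j) * 1%:M * (\prod_(j < J) E (rev_ord j))).
Proof.
move=> n1 herm hP.
pose E := fun j => expm (- (tau%:C) *: P j).
change (((2 ^ n)%:R : R[i]) <= \tr ((\prod_(j < J) E j) * 1%:M * (\prod_(j < J) E (rev_ord j)))).
pose ch : R := (expR (- tau) + expR (- - tau)) / 2.
pose sh : R := (expR (- tau) - expR (- - tau)) / 2.
have chsh : ch ^+ 2 - sh ^+ 2 = 1.
  rewrite /ch /sh opprK.
  have e : expR (- tau) * expR tau = 1 by rewrite -expRD addNr expR0.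
  by apply: (eq_trans _ e); field.
have PP : forall j, P j *m P j = 1%:M.
  move=> j; have [sg [s [_ ->]]] := hP j.
  by rewrite -scalemxAl -scalemxAr scalerA -expr2 sqrr_sign scale1r pstring_sq.
have EE : forall j, E j = ch%:C *: 1%:M + sh%:C *: P j.
  by move=> j; rewrite /E -rmorphN expm_invol.
clearbody E.
apply: final_step.
  move=> j; have [sg [s [nid Pj]]] := hP j.
  have [Q [QQ QS]] := @pstring_anti R _ _ nid.
  rewrite EE; apply: (@det_cs _ _ _ Q) => //.
    by rewrite Pj -scalemxAr -scalemxAl QS scalerN.
  by rewrite -!rmorphXn -rmorphB chsh.
move=> j; rewrite EE; exact: E_herm.
Time Qed.
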